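(* Let $q$ be a prime power and let $\lambda$ be the Liouville function on monic polynomials of $\mathbb{F}_{q^2}[T]$. For every unitary self-reciprocal polynomial $f\in\mathbb{F}_{q^2}[T]$ we have $\lambda(f)=(-1)^{\deg f}$.
   Context: The Liouville function $\lambda$ is the unique completely multiplicative function on monic polynomials of $\mathbb{F}_{q^2}[T]$ with $\lambda(P)=-1$ for every monic irreducible $P$. For a monic $f\in\mathbb{F}_{q^2}[T]$ of degree $n$ with $f(0)\neq0$, let $\sigma(f)$ be the polynomial obtained by raising each coefficient of $f$ to the $q$-th power, and define $\tilde f(T)=T^n\sigma(f)(T^{-1})/\sigma(f)(0)$; explicitly, if $f=a_0+a_1T+\cdots+a_{n-1}T^{n-1}+T^n$ then $\tilde f=(1/a_0)^q+(a_{n-1}/a_0)^qT+\cdots+(a_1/a_0)^qT^{n-1}+T^n$. A monic $f$ with $f(0)\ne0$ is unitary self-reciprocal if $f=\tilde f$ (the constant polynomial $1$ included). *)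

(* Defs.v *)
From HB Require Import structures.
From mathcomp Require Import all_boot all_order all_algebra all_field.
Set Implicit Arguments. Unset Strict Implicit. Unset Printing Implicit Defensive.
Import GRing.Theory.
Local Open Scope ring_scope.

Definition prime_power (q : nat) : Prop :=
  exists p k : nat, [/\ prime p, (0 < k)%N & q = (p ^ k)%N].

Definition is_liouville (F : fieldType) (lam : {poly F} -> int) : Prop :=
  [/\ lam 1 = 1,
      (forall f g : {poly F}, f \is monic -> g \is monic ->
          lam (f * g) = lam f * lam g)
    & (forall P : {poly F}, P \is monic -> irreducible_poly P -> lam P = -1)].

(* tilde f = T^n sigma(f)(T^{-1}) / sigma(f)(0), sigma = coefficientwise x |-> x^q;
   coefficient of T^i is (a_{n-i}/a_0)^q where n = deg f. *)
Definition urecip (F : fieldType) (q : nat) (f : {poly F}) : {poly F} :=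
  \poly_(i < size f) ((f`_((size f).-1 - i) / f`_0) ^+ q).

Definition unitary_self_reciprocal (F : fieldType) (q : nat) (f : {poly F}) : bool :=
  [&& f \is monic, f`_0 != 0 & f == urecip q f].

(* Main.v *)
Require Import Defs.
From HB Require Import structures.
From mathcomp Require Import all_boot all_order all_algebra all_field.
From Stdlib Require Import Classical.
Set Implicit Arguments. Unset Strict Implicit. Unset Printing Implicit Defensive.
Import GRing.Theory.
Local Open Scope ring_scope.

Definition revn (R : nzRingType) (f : {poly R}) : {poly R} :=
  \poly_(i < size f) f`_((size f).-1 - i).

Lemma sum_revn (R : nzRingType) (L : comUnitRingType) (phi : R -> L) (f : {poly R}) (x : L) :
  x \is a GRing.unit ->
  \sum_(i < size f) phi (revn f)`_i * x ^+ i =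
  x ^+ (size f).-1 * \sum_(i < size f) phi f`_i * x ^- i.
Proof.
move=> xu; rewrite mulr_sumr.
case Hs: (size f) => [|m]; first by rewrite !big_ord0.
rewrite (reindex_inj rev_ord_inj) /=.
apply: eq_bigr => i _.
have ilt : (i <= m)%N by rewrite -ltnS.
rewrite /revn coef_poly Hs /= subSS.
have -> : (m - i < m.+1)%N by rewrite ltnS leq_subr.
rewrite subKn //.
rewrite mulrCA; congr (_ * _).
transitivity (x ^+ (m - i + i) / x ^+ i); first by rewrite exprD mulrK // unitrX.
by rewrite subnK.
Qed.

Lemma revn0 (R : nzRingType) : revn (0 : {poly R}) = 0.
Proof. by apply/polyP => i; rewrite /revn coef_poly !coef0 if_same. Qed.

Section RevM.
Variable F : fieldType.
Local Notation Fr := {fraction {poly F}}.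
Let phi : {rmorphism F -> Fr} := (@tofrac _ \o polyC).
Let X : Fr := tofrac 'X.

Lemma X_unit : X \is a GRing.unit.
Proof. by rewrite unitfE /X tofrac_eq0 polyX_eq0. Qed.

Lemma tofrac_horner (h : {poly F}) :
  tofrac h = \sum_(i < size h) phi h`_i * X ^+ i.
Proof.
rewrite -{1}(coefK h) poly_def rmorph_sum; apply: eq_bigr => i _.
by rewrite -mul_polyC rmorphM rmorphXn.
Qed.

Let E (h : {poly F}) : Fr := (map_poly phi h).[X^-1].

Lemma EM g h : E (g * h) = E g * E h.
Proof. by rewrite /E rmorphM hornerM. Qed.

Lemma E_sum h : E h = \sum_(i < size h) phi h`_i * X ^- i.
Proof.
rewrite /E horner_coef size_map_poly; apply: eq_bigr => i _.
by rewrite coef_map exprVn.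
Qed.

Lemma tofrac_hornerE (h : {poly F}) : tofrac h = (map_poly phi h).[X].
Proof.
rewrite tofrac_horner horner_coef size_map_poly; apply: eq_bigr => i _.
by rewrite coef_map.
Qed.

Lemma tofrac_revn (h : {poly F}) : tofrac (revn h) = X ^+ (size h).-1 * E h.
Proof.
rewrite tofrac_hornerE (@horner_coef_wide _ (size h)); last first.
  by rewrite size_map_poly size_poly.
rewrite E_sum -sum_revn ?X_unit //; apply: eq_bigr => i _.
by rewrite coef_map.
Qed.

Lemma revnM (f g : {poly F}) : revn (f * g) = revn f * revn g.
Proof.
have [->|f0] := eqVneq f 0; first by rewrite mul0r revn0 mul0r.
have [->|g0] := eqVneq g 0; first by rewrite mulr0 revn0 mulr0.
apply/eqP; rewrite -tofrac_eq rmorphM /= !tofrac_revn EM size_mul //.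
rewrite mulrACA -exprD; apply/eqP; congr (_ ^+ _ * _).
have sf := size_poly_gt0 f; have sg := size_poly_gt0 g; rewrite f0 in sf; rewrite g0 in sg.
case: (size f) sf => // a _; case: (size g) sg => // b _.
by rewrite addSn addnS.
Qed.

End RevM.

Section QFrob.
Variables (R : comNzRingType) (n : nat).
Definition qfrob (_ : [pchar R].-nat n) (x : R) := x ^+ n.
Variable (Hn : [pchar R].-nat n).
Lemma qfrob_is_zmod_morphism : zmod_morphism (qfrob Hn).
Proof. by move=> x y; rewrite /qfrob exprDn_pchar // exprNn_pchar. Qed.
HB.instance Definition _ := GRing.isZmodMorphism.Build R R (qfrob Hn) qfrob_is_zmod_morphism.
Lemma qfrob_is_monoid_morphism : monoid_morphism (qfrob Hn).
Proof. by split=> [|x y]; rewrite /qfrob ?expr1n // exprMn. Qed.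
HB.instance Definition _ := GRing.isMonoidMorphism.Build R R (qfrob Hn) qfrob_is_monoid_morphism.
End QFrob.

Lemma urecipE (F : fieldType) (q : nat) (Hq : [pchar F].-nat q) (f : {poly F}) :
  urecip q f = (f`_0 ^+ q)^-1 *: revn (map_poly (qfrob Hq) f).
Proof.
apply/polyP => i; rewrite /urecip /revn coefZ !coef_poly size_map_poly.
case: ifP => H; last by rewrite mulr0.
rewrite ifT; last by rewrite (leq_ltn_trans (leq_subr _ _)) // prednK // (leq_ltn_trans _ H).
by rewrite /qfrob exprMn exprVn mulrC.
Qed.

Section Hard.
Variables (F : finFieldType) (p k : nat) (pp : prime p) (k0 : (0 < k)%N).
Hypothesis cF : #|F| = ((p ^ k) ^ 2)%N.
Variables (P : {poly F}) (hI : monic_irreducible_poly P) (P0 : P`_0 != 0).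
Hypothesis PP : urecip (p ^ k) P = P.
Local Notation q := (p ^ k)%N.
Local Notation Q := #|F|.
Local Notation d := (size P).-1.
Let K : finFieldType := {poly %/ P with hI}.
Let c : {rmorphism F -> K} := qpolyC P.
Let alpha : K := 'qX.

Lemma cardK : #|K| = (Q ^ d)%N.
Proof. exact: card_qfpoly. Qed.

Lemma root_alpha : (map_poly c P).[alpha] = 0.
Proof.
have := in_qpoly_comp_horner P P 'X; rewrite comp_polyXr => <-.
apply: val_inj => /=; rewrite (mk_monicE hI); exact: (Pdiv.RingMonic.rmodpp hI.2).
Qed.

Lemma pF : p \in [pchar F].
Proof. by apply: (@card_finPcharP _ _ (k * 2)) => //; rewrite cF expnM. Qed.

Lemma pK : p \in [pchar K].
Proof. have := pchar_qpoly P p; rewrite pF; exact. Qed.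

Lemma natF m : p.-nat m -> [pchar F].-nat m.
Proof. by rewrite (eq_pnat _ (pcharf_eq pF)). Qed.
Lemma natK m : p.-nat m -> [pchar K].-nat m.
Proof. by rewrite (eq_pnat _ (pcharf_eq pK)). Qed.
Lemma pnat_pow e : p.-nat (p ^ e)%N.
Proof. by rewrite pnatX pnat_id. Qed.
Lemma pnat_Q r : p.-nat (Q ^ r)%N.
Proof. by rewrite cF -!expnM pnat_pow. Qed.

Lemma Q_gt1 : (1 < Q)%N.
Proof. exact: card_finNzRing_gt1. Qed.

Lemma c_fix r (a : F) : a ^+ (Q ^ r)%N = a.
Proof. by elim: r => [|r IH]; rewrite ?expr1 // expnSr exprM IH expf_card. Qed.

Lemma repr_y (y : K) : y = (map_poly c (val y)).[alpha].
Proof.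
have := in_qpoly_comp_horner P (val y) 'X; rewrite comp_polyXr => <-.
apply: val_inj => /=; rewrite Pdiv.CommonRing.rmodp_small //; exact: size_mk_monic.
Qed.

Lemma fixall N (HN : [pchar K].-nat N) : (forall a : F, a ^+ N = a) ->
  alpha ^+ N = alpha -> forall y : K, y ^+ N = y.
Proof.
move=> Hc Ha y; rewrite (repr_y y).
rewrite -[LHS]/(qfrob HN _) -horner_map /= -map_poly_comp.
rewrite [X in _.[X]]/qfrob Ha; congr (_.[_]); apply: eq_map_poly => a /=.
by rewrite /qfrob -rmorphXn Hc.
Qed.

Lemma lemB r : (0 < r)%N -> alpha ^+ (Q ^ r)%N = alpha -> (d <= r)%N.
Proof.
move=> r0 Ha.
have Hall := fixall (natK (pnat_Q r)) (c_fix r) Ha.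
have N2 : (2 <= Q ^ r)%N.
  apply: (leq_trans Q_gt1); rewrite -{1}(expn1 Q) leq_pexp2l //; exact: ltnW Q_gt1.
set W : {poly K} := 'X^(Q ^ r)%N - 'X.
have sW : size W = (Q ^ r)%N.+1.
  by rewrite /W size_polyDl size_polyXn // size_polyN size_polyX.
have W0 : W != 0 by rewrite -size_poly_gt0 sW.
have := max_poly_roots W0 (_ : all (root W) (enum K)) (enum_uniq _).
rewrite sW -cardE cardK ltnS leq_exp2l ?Q_gt1 //; apply.
by apply/allP => y _; rewrite /root /W !hornerE Hall subrr.
Qed.


Lemma alpha_neq0 : alpha != 0.
Proof.
apply: contraNneq P0 => a0; have := root_alpha; rewrite a0 horner_coef0 coef_map.
by move/eqP; rewrite fmorph_eq0.
Qed.

Lemma root_pow N (HN : [pchar K].-nat N) : (forall a : F, a ^+ N = a) ->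
  (map_poly c P).[alpha ^+ N] = 0.
Proof.
move=> Hc.
have -> : map_poly c P = map_poly (qfrob HN) (map_poly c P).
  rewrite -map_poly_comp; apply: eq_map_poly => a /=.
  by rewrite /qfrob -rmorphXn Hc.
rewrite -[alpha ^+ N]/(qfrob HN alpha) horner_map root_alpha; exact: rmorph0.
Qed.

Lemma root_beta : (map_poly c P).[(alpha^-1) ^+ q] = 0.
Proof.
have Hq := natF (pnat_pow k).
have HqK := natK (pnat_pow k).
set beta := (alpha^-1) ^+ q.
have bu : beta \is a GRing.unit by rewrite unitrX // unitrV unitfE alpha_neq0.
rewrite -{1}PP (urecipE Hq) map_polyZ hornerZ.
set G := map_poly (qfrob Hq) P.
suff -> : (map_poly c (revn G)).[beta] = 0 by rewrite mulr0.
rewrite (@horner_coef_wide _ (size G)); last by rewrite size_map_poly size_poly.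
under eq_bigr => i _ do rewrite coef_map.
rewrite (sum_revn c G bu).
have -> : \sum_(i < size G) c G`_i * beta ^- i = (map_poly c G).[beta^-1].
  rewrite horner_coef (size_map_poly c G); apply: eq_bigr => i _.
  by rewrite !coef_map exprVn.
have -> : beta^-1 = qfrob HqK alpha by rewrite /beta /qfrob exprVn invrK.
have -> : map_poly c G = map_poly (qfrob HqK) (map_poly c P).
  rewrite /G -!map_poly_comp; apply: eq_map_poly => a /=.
  by rewrite /qfrob rmorphXn.
by rewrite horner_map root_alpha rmorph0 mulr0.
Qed.

Lemma d_gt0 : (0 < d)%N.
Proof. by case: hI => [[]]; case: (size P) => [|[]]. Qed.

Lemma alphaQ_inj i j : (0 < i <= d)%N -> (0 < j <= d)%N ->
  alpha ^+ (Q ^ i)%N = alpha ^+ (Q ^ j)%N -> i = j.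
Proof.
wlog ij : i j / (i <= j)%N.
  move=> H Hi Hj E; have [/H|/ltnW/H] := leqP i j; first exact.
  by move=> H'; apply/esym/H' => //; apply: esym.
move=> /andP[i0 id] /andP[j0 jd] E.
move: ij; rewrite leq_eqVlt => /orP[/eqP //|ij].
have HN := natK (pnat_Q i).
have : qfrob HN (alpha ^+ (Q ^ (j - i))%N) = qfrob HN alpha.
  by rewrite /qfrob -exprM -expnD subnK ?(ltnW ij) // E.
move/fmorph_inj => /(lemB _) H.
have := H (_ : (0 < j - i)%N); rewrite subn_gt0 => /(_ ij).
rewrite leqNgt => /negP; case.
by apply: (@leq_ltn_trans (j - 1)); [rewrite leq_sub2l | rewrite subn1 prednK // (leq_trans jd)].
Qed.

Lemma beta_pow : exists2 j, (0 < j <= d)%N & alpha ^+ (Q ^ j)%N = (alpha^-1) ^+ q.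
Proof.
set beta := (alpha^-1) ^+ q.
have [/hasP[j]|nh] := boolP (has (fun j => alpha ^+ (Q ^ j)%N == beta) (iota 1 d)).
  rewrite mem_iota => /andP[j1 jd] /eqP E; exists j => //.
  by rewrite j1 /= -ltnS -(addn1 d) addnC.
exfalso.
set rs := beta :: [seq alpha ^+ (Q ^ j)%N | j <- iota 1 d].
have Pc0 : map_poly c P != 0 by rewrite map_poly_eq0 irredp_neq0 //; case: hI.
have H1 : all (root (map_poly c P)) rs.
  apply/andP; split; first by apply/eqP; exact: root_beta.
  apply/allP => y /mapP[j _ ->]; apply/eqP.
  exact: (root_pow (natK (pnat_Q j)) (c_fix j)).
have H2 : uniq rs.
  rewrite /= map_inj_in_uniq ?iota_uniq ?andbT.
    apply: contra nh => /mapP[j jin E]; apply/hasP; exists j => //; by rewrite -E.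
  move=> i j; rewrite !mem_iota => /andP[i1 id] /andP[j1 jd]; apply: alphaQ_inj.
    by rewrite i1 /= -ltnS -(addn1 d) addnC.
  by rewrite j1 /= -ltnS -(addn1 d) addnC.
have := max_poly_roots Pc0 H1 H2.
rewrite size_map_poly /= size_map size_iota prednK ?ltnn //.
by case: hI => [[]]; case: (size P).
Qed.

Lemma alpha_mod a r : alpha ^+ (Q ^ (a * d + r))%N = alpha ^+ (Q ^ r)%N.
Proof.
have Hd : alpha ^+ (Q ^ d)%N = alpha by rewrite -cardK expf_card.
elim: a => [|a IH]; first by rewrite mul0n add0n.
by rewrite mulSn -addnA expnD exprM Hd IH.
Qed.

Lemma odd_d : odd d.
Proof.
have [j /andP[j0 jd] E] := beta_pow.
set m := (j.*2).-1.
have Qj : (Q ^ j)%N = (q ^ m * q)%N.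
  rewrite cF -expnM -expnSr /m prednK; last by rewrite double_gt0.
  by rewrite mulnC -muln2 mulnC.
have HqK := natK (pnat_pow k).
have E1 : alpha ^+ (q ^ m)%N = alpha^-1.
  have H : (alpha ^+ (q ^ m)%N) ^+ q = (alpha^-1) ^+ q by rewrite -exprM -Qj E.
  apply: (fmorph_inj (qfrob HqK)); exact: H.
have E2 : alpha ^+ (Q ^ m)%N = alpha.
  rewrite cF -expnM mul2n -addnn expnD exprM E1 exprVn E1 invrK //.
have := alpha_mod (m %/ d) (m %% d); rewrite -divn_eq E2 => /esym E3.
have mo : odd m by rewrite /m -subn1 oddB ?double_gt0 // odd_double.
have [md|md] := posnP (m %% d).
  by apply: (dvdn_odd _ mo); rewrite /dvdn md.
have := lemB md E3; rewrite leqNgt ltn_pmod //; exact: d_gt0.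
Qed.
End Hard.

Lemma coef_size (R : nzRingType) (f : {poly R}) i : f`_i != 0 -> (i < size f)%N.
Proof. by apply: contraR; rewrite -leqNgt => /leq_sizeP/(_ i (leqnn i)) ->. Qed.

Section Recip.
Variables (F : finFieldType) (p k : nat) (pp : prime p).
Hypothesis cF : #|F| = ((p ^ k) ^ 2)%N.
Local Notation q := (p ^ k)%N.
Local Notation R := (urecip q).

Lemma Hq : [pchar F].-nat q.
Proof. by rewrite (eq_pnat _ (pcharf_eq (pF pp cF))) pnat_pow. Qed.

Lemma size_gt0_c0 (f : {poly F}) : f`_0 != 0 -> (0 < size f)%N.
Proof. exact: coef_size. Qed.

Lemma sizeR (f : {poly F}) : f`_0 != 0 -> size (R f) = size f.
Proof.
move=> f0; apply/eqP; rewrite eqn_leq size_poly /=.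
have := size_gt0_c0 f0; case Hs: (size f) => [//|m] _.
apply: coef_size; rewrite /urecip coef_poly Hs ltnSn /= subnn divff //.
by rewrite expr1n oner_neq0.
Qed.

Lemma coefR (f : {poly F}) i : (i < size f)%N ->
  (R f)`_i = (f`_((size f).-1 - i) / f`_0) ^+ q.
Proof. by move=> H; rewrite /urecip coef_poly H. Qed.

Lemma R0 (f : {poly F}) : f \is monic -> f`_0 != 0 -> (R f)`_0 = (f`_0 ^+ q)^-1.
Proof.
move=> fm f0; rewrite coefR ?size_gt0_c0 // subn0 -lead_coefE (monicP fm).
by rewrite div1r exprVn.
Qed.

Lemma R0_neq0 (f : {poly F}) : f \is monic -> f`_0 != 0 -> (R f)`_0 != 0.
Proof. by move=> fm f0; rewrite R0 // invr_eq0 expf_neq0. Qed.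

Lemma Rmonic (f : {poly F}) : f \is monic -> f`_0 != 0 -> R f \is monic.
Proof.
move=> fm f0; apply/monicP; rewrite lead_coefE sizeR // coefR; last first.
  by rewrite prednK // size_gt0_c0.
by rewrite subnn divff // expr1n.
Qed.

Lemma RR (f : {poly F}) : f \is monic -> f`_0 != 0 -> R (R f) = f.
Proof.
move=> fm f0; apply/polyP => i.
have Hs := size_gt0_c0 f0.
case: (ltnP i (size f)) => H; last first.
  by rewrite !(leq_sizeP _ _ (leqnn _)) // sizeR ?R0_neq0 ?sizeR.
rewrite coefR ?sizeR ?R0_neq0 // R0 // coefR; last first.
  by rewrite (leq_ltn_trans (leq_subr _ _)) // prednK.
rewrite subKn; last by rewrite -ltnS prednK.
rewrite invrK -exprMn divfK // -exprM.
by rewrite -[(q * q)%N]/(q ^ 2)%N -cF expf_card.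
Qed.

Lemma RM (f g : {poly F}) : R (f * g) = R f * R g.
Proof.
rewrite !(urecipE Hq) coef0M exprMn invfM rmorphM revnM.
by rewrite -scalerAl -scalerAr scalerA.
Qed.

Lemma irrR (P : {poly F}) : P \is monic -> P`_0 != 0 -> irreducible_poly P ->
  irreducible_poly (R P).
Proof.
move=> Pm P0 [sP irrP]; split; first by rewrite sizeR.
move=> g sg gd.
have RP0 : R P != 0 by apply: monic_neq0; apply: Rmonic.
set h := R P %/ g.
have Eh : R P = h * g by rewrite divpK.
have : (R P)`_0 != 0 by apply: R0_neq0.
rewrite Eh coef0M mulf_eq0 negb_or => /andP[h0 g0].
have : P = R h * R g by rewrite -RM -Eh RR.
move=> EP.
have RgP : R g %| P by rewrite EP dvdp_mulIr.
have := irrP (R g); rewrite sizeR // => /(_ sg RgP) /eqp_size.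
rewrite sizeR // => sgP.
rewrite -dvdp_size_eqp; last by rewrite dvdp_mull.
rewrite -Eh; apply/eqP; transitivity (size P); [exact: sgP | exact: (esym (sizeR P0))].
Qed.

End Recip.

Lemma exists_irr (F : fieldType) (f : {poly F}) : (1 < size f)%N ->
  exists P : {poly F}, [/\ P \is monic, irreducible_poly P & P %| f].
Proof.
move: {2}(size f) (leqnn (size f)) => n; elim: n f => [|n IH] f sf s1.
  by move: (leq_trans s1 sf).
have f0 : f != 0 by rewrite -size_poly_gt0 (ltn_trans _ s1).
have [[g [sg gf ngf]]|H] :=
  classic (exists g : {poly F}, [/\ size g != 1%N, g %| f & ~~ (g %= f)]).
  have g0 : g != 0 by apply: contraTneq gf => ->; rewrite dvd0p.
  have lg : (size g < size f)%N.
    by rewrite ltn_neqAle dvdp_leq // andbT dvdp_size_eqp.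
  have g1 : (1 < size g)%N by rewrite ltn_neqAle eq_sym sg /= size_poly_gt0.
  have gn : (size g <= n)%N by rewrite -ltnS (leq_trans lg).
  have [P [Pm Pi Pg]] := IH g gn g1.
  by exists P; split => //; apply: dvdp_trans Pg gf.
have lf0 : lead_coef f != 0 by rewrite lead_coef_eq0.
have li0 : (lead_coef f)^-1 != 0 by rewrite invr_eq0.
exists ((lead_coef f)^-1 *: f); split.
- by apply/monicP; rewrite lead_coefZ mulVf.
- split; first by rewrite size_scale.
  move=> g sg gd.
  have gf : g %| f by rewrite -(eqp_dvdr _ (eqp_scale f li0)).
  have : g %= f.
    apply: NNPP => ng; apply: H; exists g; split => //; exact/negP.
  move=> gef; apply: (eqp_trans gef); rewrite eqp_sym; exact: eqp_scale.
- by rewrite dvdpZl.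
Qed.

Lemma size_mul_pred (F : fieldType) (x y : {poly F}) : x != 0 -> y != 0 ->
  (size (x * y)).-1 = ((size x).-1 + (size y).-1)%N.
Proof.
move=> x0 y0; rewrite size_mul //.
have sx := size_poly_gt0 x; have sy := size_poly_gt0 y; rewrite x0 in sx; rewrite y0 in sy.
case: (size x) sx => // a _; case: (size y) sy => // b _.
by rewrite addSn addnS.
Qed.

Unset Implicit Arguments.
Theorem theorem5p13 (q : nat) (F : finFieldType) (lam : {poly F} -> int) :
  prime_power q -> #|F| = (q ^ 2)%N -> is_liouville lam ->
  forall f : {poly F}, unitary_self_reciprocal q f ->
    lam f = (-1) ^+ (size f).-1.
Proof.
move=> [p [k [pp k0 ->]]] cF [l1 lM lirr] f.
move: {2}(size f) (leqnn (size f)) => n; elim: n f => [|n IH] f sf /and3P[fm f0 /eqP fR].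
  by move: sf; rewrite leqn0 size_poly_eq0 (negbTE (monic_neq0 fm)).
have s1 : (0 < size f)%N by rewrite size_poly_gt0 monic_neq0.
have [sf1|sf1] := eqVneq (size f) 1%N.
  have -> : f = 1.
    rewrite [f]size1_polyC ?sf1 //; congr (_%:P).
    by rewrite -(monicP fm) lead_coefE sf1.
  by rewrite l1 size_poly1 expr0.
have s2 : (1 < size f)%N by rewrite ltn_neqAle eq_sym sf1.
have [P [Pm Pi Pd]] := exists_irr s2.
have P0' : P != 0 by apply: monic_neq0.
set g0 := f %/ P.
have Ef : f = g0 * P by rewrite divpK.
have : f`_0 != 0 by [].
rewrite {1}Ef coef0M mulf_eq0 negb_or => /andP[g00 P0].
have RPm : urecip (p ^ k)%N P \is monic by apply: Rmonic.
have RPi : irreducible_poly (urecip (p ^ k)%N P) by apply: (irrR pp cF).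
have RP0 : (urecip (p ^ k)%N P)`_0 != 0 by apply: R0_neq0.
have RPd : urecip (p ^ k)%N P %| f by rewrite fR {1}Ef (RM pp cF) dvdp_mull.
have sP1 : size P != 1%N by case: Pi => sP _; rewrite neq_ltn sP orbT.
have [RPP|RPnP] := eqVneq (urecip (p ^ k)%N P) P.
- have gm : g0 \is monic by rewrite -(monicMr _ Pm) -Ef.
  have g0ne : g0 != 0 by apply: monic_neq0.
  have Rg : g0 = urecip (p ^ k)%N g0.
    apply: (mulIf P0'); rewrite -Ef {1}fR Ef (RM pp cF) RPP //.
  have lg : (size g0 <= n)%N.
    rewrite -ltnS (leq_trans _ sf) // Ef size_mul // -subn1 -addnBA; last by case: Pi => /ltnW.
    by rewrite -[X in (X < _)%N]addn0 ltn_add2l subn_gt0; case: Pi.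
  have U : unitary_self_reciprocal (p ^ k)%N g0.
    by rewrite /unitary_self_reciprocal gm g00 -Rg eqxx.
  have Hg := IH g0 lg U.
  have Pd' : odd (size P).-1 := odd_d pp cF (Pi, Pm) P0 RPP.
  rewrite Ef lM // Hg (lirr _ Pm Pi) size_mul_pred // exprD.
  by rewrite -(signr_odd _ (size P).-1) Pd' expr1.
- have cop : coprimep P (urecip (p ^ k)%N P).
    rewrite irreducible_poly_coprime //; apply/negP => PRP.
    have := RPi P sP1 PRP; rewrite eqp_monic // => /eqP E.
    by move: RPnP; rewrite -E eqxx.
  have PRd : P * urecip (p ^ k)%N P %| f by rewrite Gauss_dvdp // Pd RPd.
  set g := f %/ (P * urecip (p ^ k)%N P).
  have PRm : P * urecip (p ^ k)%N P \is monic by rewrite monicMl.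
  have PR0 : P * urecip (p ^ k)%N P != 0 by apply: monic_neq0.
  have Ef2 : f = g * (P * urecip (p ^ k)%N P) by rewrite divpK.
  have gm : g \is monic by rewrite -(monicMr _ PRm) -Ef2.
  have g0ne : g != 0 by apply: monic_neq0.
  have : f`_0 != 0 by [].
  rewrite {1}Ef2 coef0M mulf_eq0 negb_or => /andP[g_0 _].
  have Rg : g = urecip (p ^ k)%N g.
    apply: (mulIf PR0); rewrite -Ef2 {1}fR Ef2 !(RM pp cF) (RR cF) //.
    by rewrite [urecip (p ^ k)%N P * P]mulrC.
  have lg : (size g <= n)%N.
    rewrite -ltnS (leq_trans _ sf) // Ef2 size_mul // -subn1 -addnBA; last first.
      by rewrite size_poly_gt0.
    rewrite -[X in (X < _)%N]addn0 ltn_add2l subn_gt0 size_mul ?monic_neq0 //.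
    have sP : (1 < size P)%N by case: Pi.
    rewrite (sizeR p k P0); move: sP; case: (size P) => // m; case: m => // m _.
    by rewrite !addSn addnS.
  have U : unitary_self_reciprocal (p ^ k)%N g.
    by rewrite /unitary_self_reciprocal gm g_0 -Rg eqxx.
  have Hg := IH g lg U.
  rewrite Ef2 lM // Hg lM // (lirr _ Pm Pi) (lirr _ RPm RPi) !size_mul_pred ?monic_neq0 //.
  rewrite (sizeR p k P0) addnn -mul2n exprD exprM sqrrN mulrNN mulr1 -exprM.
  have -> : (1 : int) ^+ (2 * (size P).-1)%N = 1 by apply: expr1n.
  by rewrite mulr1.
Qed.
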